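(* Let $N$ be a torsion-free finitely generated nilpotent group of nilpotency class $2$ with a finite generating subset $S$. For $x\in N$ let $I_x=\{[y,x]: y\in N\}\le\gamma_2(N)$, where $[a,b]=aba^{-1}b^{-1}$. Then there exists $C>0$ such that $\|I_x\|_S\le C\sqrt{\|x\|_S}$ for every $x\in N$.
   Context: $\|\cdot\|_S$ is word length; for a subgroup $H$, $\|H\|_S=\min\{\max_{h\in X}\|h\|_S: X\text{ a finite generating subset of }H\}$. In class $2$, $y\mapsto[y,x]=y\,x\,y^{-1}x^{-1}$ is a homomorphism $N\to\gamma_2(N)=[N,N]$ and $I_x$ is its image (the image of the map $\psi_{\mathrm{Inn}(x),2}$ in the paper). *)

(* Defs.v *)
From Stdlib Require Import Reals List.
Import ListNotations.
Open Scope R_scope.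

Record Group := {
  carrier :> Type;
  gmul : carrier -> carrier -> carrier;
  ginv : carrier -> carrier;
  gone : carrier;
  gmul_assoc : forall a b c, gmul a (gmul b c) = gmul (gmul a b) c;
  gmul_1l : forall a, gmul gone a = a;
  gmul_1r : forall a, gmul a gone = a;
  gmul_Vl : forall a, gmul (ginv a) a = gone;
  gmul_Vr : forall a, gmul a (ginv a) = gone
}.

Section Defs.
Variable N : Group.

Definition comm (a b : N) : N :=
  gmul N a (gmul N b (gmul N (ginv N a) (ginv N b))).

Fixpoint gpow (x : N) (n : nat) : N :=
  match n with O => gone N | S k => gmul N x (gpow x k) end.

Definition torsion_free : Prop :=
  forall (x : N) (n : nat), (0 < n)%nat -> gpow x n = gone N -> x = gone N.

Definition nilpotent_class_2 : Prop :=
  (forall a b c : N, comm (comm a b) c = gone N) /\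
  (exists a b : N, comm a b <> gone N).

(* words: letters (s, true) = s, (s, false) = s^-1 *)
Definition eval_word (w : list (N * bool)) : N :=
  fold_right (fun (l : N * bool) (acc : N) => gmul N (if snd l then fst l else ginv N (fst l)) acc)
             (gone N) w.

Definition word_over (X : list N) (w : list (N * bool)) : Prop :=
  forall l, In l w -> In (fst l) X.

Definition generates (X : list N) (H : N -> Prop) : Prop :=
  (forall h, In h X -> H h) /\
  (forall h, H h -> exists w, word_over X w /\ eval_word w = h).

Definition is_word_length (S : list N) (x : N) (n : nat) : Prop :=
  (exists w, word_over S w /\ eval_word w = x /\ length w = n) /\
  (forall w, word_over S w -> eval_word w = x -> (n <= length w)%nat).

(* m is ||H||_S = min over finite generating subsets X of H of max_{h in X} ||h||_S
   (max over the empty set is 0) *)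
Definition bounded_gen_set (S : list N) (X : list N) (m : nat) : Prop :=
  forall h, In h X -> exists k, is_word_length S h k /\ (k <= m)%nat.

Definition is_subgroup_norm (S : list N) (H : N -> Prop) (m : nat) : Prop :=
  (exists X, generates X H /\ bounded_gen_set S X m) /\
  (forall X m', generates X H -> bounded_gen_set S X m' -> (m <= m')%nat).

Definition I_ (x : N) : N -> Prop := fun z => exists y, z = comm y x.

End Defs.

(* Main.v *)
Require Import Defs.
From Stdlib Require Import Reals List Lia Lra Arith ClassicalEpsilon Classical.
Import ListNotations.
Open Scope R_scope.

Section G.
Variable N : Group.
Local Notation "a ** b" := (gmul N a b) (at level 40, left associativity).
Local Notation "a ^-" := (ginv N a) (at level 30).
Local Notation e := (gone N).

Lemma mVl (a b : N) : a ^- ** (a ** b) = b.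
Proof. rewrite gmul_assoc, gmul_Vl, gmul_1l; reflexivity. Qed.
Lemma mVr (a b : N) : a ** (a ^- ** b) = b.
Proof. rewrite gmul_assoc, gmul_Vr, gmul_1l; reflexivity. Qed.

Ltac gnorm := repeat (rewrite <- gmul_assoc); repeat (rewrite mVl || rewrite mVr || rewrite gmul_Vr || rewrite gmul_Vl || rewrite gmul_1l || rewrite gmul_1r); try reflexivity.

Lemma inv_uniq (a b : N) : a ** b = e -> b = a ^-.
Proof. intro H. rewrite <- (mVl a b), H, gmul_1r. reflexivity. Qed.
Lemma inv_uniq' (a b : N) : a ** b = e -> a = b ^-.
Proof. intro H. rewrite <- (gmul_1r N a), <- (gmul_Vr N b), gmul_assoc, H, gmul_1l. reflexivity. Qed.
Lemma inv_inv (a : N) : (a ^-) ^- = a.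
Proof. symmetry. apply inv_uniq. apply gmul_Vl. Qed.
Lemma inv_mul (a b : N) : (a ** b) ^- = b ^- ** a ^-.
Proof. symmetry. apply inv_uniq. gnorm. Qed.
Lemma inv_one : e ^- = e.
Proof. symmetry. apply inv_uniq. apply gmul_1l. Qed.

Lemma comm_swap (a b : N) : (comm N a b) ^- = comm N b a.
Proof. symmetry. apply inv_uniq. unfold comm. gnorm. Qed.

Lemma comm1_commute (a c : N) : comm N a c = e -> a ** c = c ** a.
Proof. unfold comm. intro H. rewrite gmul_assoc in H. apply inv_uniq' in H.
  rewrite H, inv_mul, !inv_inv. reflexivity. Qed.

Definition central (z : N) := forall c, z ** c = c ** z.

Lemma central_inv z : central z -> central (z ^-).
Proof. intros H c. transitivity (z ^- ** (c ** z) ** z ^-).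
  - gnorm.
  - rewrite <- H. gnorm. Qed.
Lemma central_mul z y : central z -> central y -> central (z ** y).
Proof. intros Hz Hy c. rewrite <- gmul_assoc, Hy, gmul_assoc, Hz. gnorm. Qed.


Lemma gpow_add x p q : gpow N x (p + q) = gpow N x p ** gpow N x q.
Proof. induction p; simpl. - rewrite gmul_1l; reflexivity. - rewrite IHp, gmul_assoc; reflexivity. Qed.
Lemma gpow_Sr x p : gpow N x (S p) = gpow N x p ** x.
Proof. rewrite <- Nat.add_1_r, gpow_add. simpl. rewrite gmul_1r. reflexivity. Qed.
Lemma gpow_mul x p q : gpow N x (p * q) = gpow N (gpow N x q) p.
Proof. induction p; simpl. - reflexivity. - rewrite gpow_add, IHp. reflexivity. Qed.
Lemma gpow_inv x p : gpow N (x ^-) p = (gpow N x p) ^-.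
Proof. apply inv_uniq'. induction p. - simpl. apply gmul_1l.
  - rewrite gpow_Sr. simpl. gnorm. exact IHp. Qed.
Lemma central_gpow z p : central z -> central (gpow N z p).
Proof. intro H. induction p; intro c; simpl. - rewrite gmul_1l, gmul_1r; reflexivity.
  - apply central_mul; assumption. Qed.

Section C2.
Hypothesis Hc : forall a b c : N, comm N (comm N a b) c = e.

Lemma comm_central a b : central (comm N a b).
Proof. intro c. apply comm1_commute, Hc. Qed.

Lemma comm_mul_l a b x : comm N (a ** b) x = comm N a x ** comm N b x.
Proof.
  assert (E : comm N b x ** x = b ** (x ** b ^-)).
  { unfold comm. gnorm. }
  rewrite (comm_central a x).
  transitivity (a ** ((comm N b x ** x) ** (a ^- ** x ^-))).
  - rewrite E. unfold comm. rewrite inv_mul. gnorm.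
  - rewrite <- gmul_assoc. rewrite (gmul_assoc N a (comm N b x)), <- (comm_central b x a).
    rewrite <- gmul_assoc. f_equal.
Qed.

Lemma comm_1l x : comm N e x = e.
Proof. unfold comm. rewrite inv_one. gnorm. Qed.
Lemma comm_1r x : comm N x e = e.
Proof. unfold comm. rewrite inv_one. gnorm. Qed.

Lemma comm_mul_r a y z : comm N a (y ** z) = comm N a y ** comm N a z.
Proof.
  rewrite <- !(comm_swap (_) a), comm_mul_l, inv_mul, (central_inv _ (comm_central z a)).
  reflexivity. Qed.

Lemma comm_inv_l a x : comm N (a ^-) x = (comm N a x) ^-.
Proof. apply inv_uniq. rewrite <- comm_mul_l, gmul_Vr. apply comm_1l. Qed.
Lemma comm_inv_r a x : comm N x (a ^-) = (comm N x a) ^-.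
Proof. apply inv_uniq. rewrite <- comm_mul_r, gmul_Vr. apply comm_1r. Qed.

Lemma comm_gpow_l u y a : comm N (gpow N u a) y = gpow N (comm N u y) a.
Proof. induction a; simpl. - apply comm_1l. - rewrite comm_mul_l, IHa. reflexivity. Qed.
Lemma comm_gpow_r u y a : comm N u (gpow N y a) = gpow N (comm N u y) a.
Proof. induction a; simpl. - apply comm_1r. - rewrite comm_mul_r, IHa. reflexivity. Qed.
Lemma comm_gpow u v a b : comm N (gpow N u a) (gpow N v b) = gpow N (comm N u v) (a * b).
Proof. rewrite comm_gpow_l, comm_gpow_r, gpow_mul. reflexivity. Qed.

End C2.
End G.

Section W.
Variable N : Group.
Variable S : list N.
Hypothesis Hc : forall a b c : N, comm N (comm N a b) c = gone N.
Local Notation "a ** b" := (gmul N a b) (at level 40, left associativity).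
Local Notation "a ^-" := (ginv N a) (at level 30).
Local Notation e := (gone N).

Lemma eval_app w1 w2 : eval_word N (w1 ++ w2) = eval_word N w1 ** eval_word N w2.
Proof. induction w1 as [|l w1 IH]; simpl. - rewrite gmul_1l; reflexivity.
  - rewrite IH, gmul_assoc. reflexivity. Qed.
Lemma eval_rep u b a : eval_word N (repeat (u, b) a) = gpow N (if b then u else u ^-) a.
Proof. induction a; simpl. reflexivity. rewrite IHa. reflexivity. Qed.
Lemma eval_wpow wc r : eval_word N (concat (repeat wc r)) = gpow N (eval_word N wc) r.
Proof. induction r; simpl. reflexivity. rewrite eval_app, IHr. reflexivity. Qed.
Lemma wo_app w1 w2 : word_over N S w1 -> word_over N S w2 -> word_over N S (w1 ++ w2).
Proof. intros H1 H2 l Hl. apply in_app_or in Hl. destruct Hl; auto. Qed.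
Lemma wo_rep u b a : In u S -> word_over N S (repeat (u, b) a).
Proof. intros Hu l Hl. apply repeat_spec in Hl. subst. exact Hu. Qed.
Lemma wo_wpow wc r : word_over N S wc -> word_over N S (concat (repeat wc r)).
Proof. intros H l Hl. apply in_concat in Hl. destruct Hl as [x [Hx Hl]].
  apply repeat_spec in Hx. subst. auto. Qed.
Lemma len_wpow (wc : list (N * bool)) r : length (concat (repeat wc r)) = (r * length wc)%nat.
Proof. induction r; simpl. reflexivity. rewrite length_app, IHr. reflexivity. Qed.

Lemma sqrt_nat_le a k : (a * a <= k)%nat -> INR a <= sqrt (INR k).
Proof. intro H. rewrite <- (sqrt_square (INR a)) by apply pos_INR.
  apply sqrt_le_1_alt. rewrite <- mult_INR. apply le_INR. exact H. Qed.

Lemma pow_word u v k : In u S -> In v S ->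
  exists w, word_over N S w /\ eval_word N w = gpow N (comm N u v) k /\
    INR (length w) <= 12 * sqrt (INR k).
Proof.
  intros Hu Hv. destruct k as [|k'].
  - exists []. split; [intros l []|]. split; [reflexivity|]. simpl. rewrite sqrt_0. lra.
  - set (k := Datatypes.S k'). set (a := Nat.sqrt k). set (b := (k / a)%nat). set (r := (k mod a)%nat).
    assert (Ha : (a * a <= k < Datatypes.S a * Datatypes.S a)%nat) by (pose proof (Nat.sqrt_spec k); unfold a; lia).
    assert (Ha0 : (a <> 0)%nat) by (intro H0; rewrite H0 in Ha; unfold k in Ha; lia).
    assert (Hk : k = (a * b + r)%nat) by (apply Nat.div_mod_eq).
    assert (Hb : (b <= a + 2)%nat) by (apply Nat.Div0.div_le_upper_bound; nia).
    assert (Hr : (r < a)%nat) by (apply Nat.mod_upper_bound; exact Ha0).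
    exists (repeat (u,true) a ++ repeat (v,true) b ++ repeat (u,false) a ++ repeat (v,false) b
       ++ concat (repeat [(u,true);(v,true);(u,false);(v,false)] r)).
    split; [|split].
    + repeat apply wo_app; try apply wo_rep; auto. apply wo_wpow.
      intros l Hl. simpl in Hl. destruct Hl as [<-|[<-|[<-|[<-|[]]]]]; auto.
    + rewrite !eval_app, !eval_rep, eval_wpow. fold k. rewrite Hk, gpow_add.
      rewrite <- comm_gpow by exact Hc. rewrite !gpow_inv. simpl.
      rewrite !gmul_1r. unfold comm. rewrite !gmul_assoc. reflexivity.
    + rewrite !length_app, !repeat_length, len_wpow. simpl.
      apply Rle_trans with (12 * INR a).
      * replace 12 with (INR 12) by (simpl; lra). rewrite <- mult_INR. apply le_INR. lia.
      * apply Rmult_le_compat_l. lra. change (INR a <= sqrt (INR k)). apply sqrt_nat_le. lia.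
Qed.
End W.

Section D.
Variable N : Group.
Hypothesis Hc : forall a b c : N, comm N (comm N a b) c = gone N.
Variable s : N.
Local Notation "a ** b" := (gmul N a b) (at level 40, left associativity).
Local Notation "a ^-" := (ginv N a) (at level 30).
Local Notation e := (gone N).

Definition dec (a b : N) : {a = b} + {a <> b} := excluded_middle_informative (a = b).

Fixpoint pc (t : N) (w : list (N * bool)) : nat :=
  match w with [] => 0%nat | l :: w' =>
    ((if dec (fst l) t then (if snd l then 1 else 0) else 0) + pc t w')%nat end.
Fixpoint qc (t : N) (w : list (N * bool)) : nat :=
  match w with [] => 0%nat | l :: w' =>
    ((if dec (fst l) t then (if snd l then 0 else 1) else 0) + qc t w')%nat end.

Definition fct (t : N) w := gpow N (comm N s t) (pc t w) ** gpow N ((comm N s t) ^-) (qc t w).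
Definition prodT (T : list N) w := fold_right (fun t acc => fct t w ** acc) e T.
Definition lv (l : N * bool) := if snd l then comm N s (fst l) else (comm N s (fst l)) ^-.

Lemma pcqc t w : (pc t w + qc t w <= length w)%nat.
Proof. induction w as [|l w IH]; simpl. lia. destruct (dec (fst l) t), (snd l); lia. Qed.

Lemma lv_central l : central N (lv l).
Proof. unfold lv. destruct (snd l). apply comm_central, Hc. apply central_inv, comm_central, Hc. Qed.

Lemma fct_other t l w : fst l <> t -> fct t (l :: w) = fct t w.
Proof. intro H. unfold fct. simpl. destruct (dec (fst l) t); [contradiction|]. reflexivity. Qed.

Lemma prodT_notin T l w : ~ In (fst l) T -> prodT T (l :: w) = prodT T w.
Proof. induction T as [|t T IH]; intro H; simpl. reflexivity.
  rewrite fct_other by (intro E; apply H; left; auto). rewrite IH by (intro; apply H; right; auto).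
  reflexivity. Qed.

Lemma prodT_cons T l w : NoDup T -> In (fst l) T -> prodT T (l :: w) = lv l ** prodT T w.
Proof.
  induction T as [|t T IH]; intros HT Hin; [destruct Hin|].
  apply NoDup_cons_iff in HT. destruct HT as [Ht HT]. simpl.
  destruct (dec (fst l) t) as [E|E].
  - rewrite prodT_notin by (rewrite E; exact Ht). rewrite gmul_assoc. f_equal.
    unfold fct, lv. simpl. destruct (dec (fst l) t); [|contradiction]. rewrite E.
    destruct (snd l); simpl.
    + rewrite gmul_assoc. reflexivity.
    + rewrite !gmul_assoc. f_equal. symmetry. apply (central_inv N _ (comm_central N Hc s t)).
  - destruct Hin as [Hin|Hin]; [symmetry in Hin; contradiction|].
    rewrite fct_other by exact E. rewrite IH by assumption.
    rewrite !gmul_assoc. f_equal. symmetry. apply lv_central.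
Qed.

Lemma prodT_nil T : prodT T [] = e.
Proof. induction T; simpl. reflexivity. rewrite IHT. unfold fct. simpl. rewrite !gmul_1l. reflexivity. Qed.

Lemma decomp T w : NoDup T -> word_over N T w -> comm N s (eval_word N w) = prodT T w.
Proof.
  intro HT. induction w as [|l w IH]; intro Hw; simpl.
  - rewrite prodT_nil. apply comm_1r.
  - rewrite prodT_cons; [| exact HT | apply Hw; left; reflexivity].
    rewrite comm_mul_r by exact Hc. rewrite IH by (intros l' Hl'; apply Hw; right; exact Hl').
    f_equal. unfold lv. destruct (snd l). reflexivity. apply comm_inv_r, Hc.
Qed.
End D.

Section F.
Variable N : Group.
Variable S : list N.
Hypothesis Hc : forall a b c : N, comm N (comm N a b) c = gone N.
Local Notation "a ** b" := (gmul N a b) (at level 40, left associativity).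
Local Notation "a ^-" := (ginv N a) (at level 30).
Local Notation e := (gone N).

Lemma wl_exists h L w : word_over N S w -> eval_word N w = h -> (length w <= L)%nat ->
  exists k, is_word_length N S h k /\ (k <= L)%nat.
Proof.
  revert w. induction L as [L IH] using (well_founded_induction lt_wf). intros w Hw Hev HL.
  destruct (classic (exists w', word_over N S w' /\ eval_word N w' = h /\ (length w' < length w)%nat))
    as [[w' [Hw' [He' Hl']]]|Hno].
  - destruct (IH (length w') ltac:(lia) w' Hw' He' (le_n _)) as [k [Hk Hkl]].
    exists k. split; [exact Hk|lia].
  - exists (length w). split; [|exact HL]. split.
    + exists w. auto.
    + intros w' Hw' He'. destruct (Nat.lt_ge_cases (length w') (length w)) as [Hlt|Hge]; [|exact Hge].
      exfalso. apply Hno. eauto.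
Qed.

Lemma bounded_list (X : list N) (B : R) : 0 <= B ->
  (forall h, In h X -> exists k, is_word_length N S h k /\ INR k <= B) ->
  exists m', bounded_gen_set N S X m' /\ INR m' <= B.
Proof.
  intros HB. induction X as [|h X IH]; intro H.
  - exists 0%nat. split. intros h []. simpl. exact HB.
  - destruct IH as [m1 [Hm1 Hm1B]]. intros h' Hh'. apply H. right. exact Hh'.
    destruct (H h (or_introl eq_refl)) as [k [Hk HkB]].
    exists (Nat.max k m1). split.
    + intros h' [<-|Hh']. exists k. split; [exact Hk| lia].
      destruct (Hm1 h' Hh') as [k' [Hk' Hk'l]]. exists k'. split; [exact Hk'|lia].
    + destruct (Nat.max_spec k m1) as [[_ ->]|[_ ->]]; assumption.
Qed.

Lemma prodT_word s T w : In s S -> incl T S ->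
  exists ww, word_over N S ww /\ eval_word N ww = prodT N s T w /\
    INR (length ww) <= INR (length T) * (24 * sqrt (INR (length w))).
Proof.
  intros Hs. induction T as [|t T IH]; intro HT.
  - exists []. split. intros l []. split. reflexivity. simpl. lra.
  - destruct IH as [w1 [Hw1 [He1 Hl1]]]. intros y Hy. apply HT. right. exact Hy.
    assert (Ht : In t S) by (apply HT; left; reflexivity).
    destruct (pow_word N S Hc s t (pc N t w) Hs Ht) as [wp [Hwp [Hep Hlp]]].
    destruct (pow_word N S Hc t s (qc N t w) Ht Hs) as [wq [Hwq [Heq Hlq]]].
    exists (wp ++ wq ++ w1). split; [|split].
    + repeat apply wo_app; assumption.
    + rewrite !eval_app, Hep, Heq, He1. simpl. unfold fct. rewrite comm_swap. rewrite gmul_assoc. reflexivity.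
    + pose proof (pcqc N t w) as Hpq.
      assert (Sp : sqrt (INR (pc N t w)) <= sqrt (INR (length w)))
        by (apply sqrt_le_1_alt, le_INR; lia).
      assert (Sq : sqrt (INR (qc N t w)) <= sqrt (INR (length w)))
        by (apply sqrt_le_1_alt, le_INR; lia).
      rewrite !length_app, !plus_INR. simpl length. rewrite S_INR. lra.
Qed.

Lemma comm_eval_l x w : comm N (eval_word N w) x =
  eval_word N (map (fun l : N * bool => (comm N (fst l) x, snd l)) w).
Proof.
  induction w as [|l w IH]; simpl.
  - apply comm_1l.
  - rewrite comm_mul_l by exact Hc. rewrite IH. f_equal. destruct (snd l). reflexivity.
    apply comm_inv_l, Hc.
Qed.
End F.

Theorem mainTheorem14 (N : Group) (S : list N)
  (Hgen : forall g : N, exists w, word_over N S w /\ eval_word N w = g)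
  (Htf : torsion_free N) (Hcl : nilpotent_class_2 N) :
  exists C : R, C > 0 /\
    forall (x : N) (n m : nat),
      is_word_length N S x n ->
      is_subgroup_norm N S (I_ N x) m ->
      INR m <= C * sqrt (INR n).
Proof.
  destruct Hcl as [Hc _].
  exists (24 * INR (length S) + 1). split.
  { pose proof (pos_INR (length S)). lra. }
  intros x n m [[w0 [Hw0 [He0 Hl0]]] _] [_ Hmin].
  set (B := INR (length S) * (24 * sqrt (INR n))).
  assert (HB : 0 <= B).
  { unfold B. apply Rmult_le_pos. apply pos_INR. pose proof (sqrt_pos (INR n)). lra. }
  set (X := map (fun s => comm N s x) S).
  assert (Hgx : generates N X (I_ N x)).
  { split.
    - intros h Hh. unfold X in Hh. apply in_map_iff in Hh. destruct Hh as [s [<- _]]. exists s. reflexivity.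
    - intros h [y ->]. destruct (Hgen y) as [w [Hw <-]].
      exists (map (fun l : N * bool => (comm N (fst l) x, snd l)) w). split.
      + intros l' Hl'. apply in_map_iff in Hl'. destruct Hl' as [l [<- Hl]]. simpl.
        unfold X. apply (in_map (fun s => comm N s x)). apply Hw. exact Hl.
      + symmetry. apply comm_eval_l. exact Hc. }
  destruct (bounded_list N S X B HB) as [m' [Hm' Hm'B]].
  { intros h Hh. unfold X in Hh. apply in_map_iff in Hh. destruct Hh as [s [<- Hs]].
    set (S' := nodup (dec N) S).
    assert (HS' : NoDup S') by apply NoDup_nodup.
    assert (Hinc : incl S' S) by (intros y Hy; apply nodup_In in Hy; exact Hy).
    assert (Hlen : (length S' <= length S)%nat) by (apply NoDup_incl_length; assumption).
    destruct (prodT_word N S Hc s S' w0 Hs Hinc) as [ww [Hww [Heww Hlww]]].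
    rewrite <- decomp in Heww; [| exact Hc | exact HS' |].
    2: { intros l Hl. unfold S'. apply nodup_In. apply Hw0. exact Hl. }
    rewrite He0 in Heww.
    destruct (wl_exists N S _ (length ww) ww Hww Heww (le_n _)) as [k [Hk Hkl]].
    exists k. split; [exact Hk|].
    apply Rle_trans with (INR (length ww)). apply le_INR. exact Hkl.
    apply Rle_trans with (1 := Hlww). unfold B. rewrite Hl0.
    apply Rmult_le_compat_r. pose proof (sqrt_pos (INR n)). lra. apply le_INR. exact Hlen. }
  pose proof (Hmin X m' Hgx Hm') as Hmm.
  apply Rle_trans with (INR m'). apply le_INR. exact Hmm.
  apply Rle_trans with B. exact Hm'B. unfold B.
  pose proof (sqrt_pos (INR n)). pose proof (pos_INR (length S)). nra.
Qed.
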